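(* Let $X$ be a Tychonoff pseudocompact space and $Y$ any space. Then $\mathsf{EC_{cl}}(X,Y)\Leftrightarrow\mathsf{EC_{cpt}}(X,Y)$.
   Context: All spaces are Hausdorff and maps continuous. A space is pseudocompact if every continuous real-valued function on it is bounded. For a non-Lindelöf space $X$ and a space $Y$: $\mathsf{EC_{cl}}(X,Y)$ means that for every continuous $f:X\to Y$ there is a closed Lindelöf $Z\subset X$ with $f(X\setminus Z)$ a singleton; $\mathsf{EC_{cpt}}(X,Y)$ is the same with ''compact'' in place of ''closed Lindelöf''. *)

(* Defs.v *)
From HB Require Import structures.
From mathcomp Require Import all_boot all_order all_algebra.
From mathcomp Require Import all_classical all_reals all_analysis.
From mathcomp Require Import Rstruct Rstruct_topology.

Set Implicit Arguments. Unset Strict Implicit. Unset Printing Implicit Defensive.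
Import Order.TTheory GRing.Theory Num.Theory.
Local Open Scope classical_set_scope.
Local Open Scope ring_scope.

Definition lindelof {T : topologicalType} (A : set T) : Prop :=
  forall (I : Type) (U : I -> set T),
    (forall i, open (U i)) -> A `<=` \bigcup_(i in setT) U i ->
    exists J : set I, countable J /\ A `<=` \bigcup_(i in J) U i.

Definition tychonoff_space (T : topologicalType) : Prop :=
  hausdorff_space T /\
  forall (A : set T) (x : T), closed A -> ~ A x ->
    exists f : T -> Rdefinitions.R,
      continuous f /\ (forall y, 0 <= f y <= 1) /\ f x = 0 /\
      (forall a, A a -> f a = 1).

Definition pseudocompact (T : topologicalType) : Prop :=
  forall f : T -> Rdefinitions.R, continuous f ->
    exists M : Rdefinitions.R, forall x, `|f x| <= M.

Definition EC_cl (X Y : topologicalType) : Prop :=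
  forall f : X -> Y, continuous f ->
    exists Z : set X, closed Z /\ lindelof Z /\
      exists y : Y, f @` (~` Z) = [set y].

Definition EC_cpt (X Y : topologicalType) : Prop :=
  forall f : X -> Y, continuous f ->
    exists Z : set X, compact Z /\
      exists y : Y, f @` (~` Z) = [set y].

(* Main.v *)
Require Import Defs.
From HB Require Import structures.
From mathcomp Require Import all_boot all_order all_algebra.
From mathcomp Require Import all_classical all_reals all_analysis.
From mathcomp Require Import Rstruct Rstruct_topology finmap.
From mathcomp Require Import lra.
Set Implicit Arguments. Unset Strict Implicit. Unset Printing Implicit Defensive.
Import Order.TTheory GRing.Theory Num.Theory.
Local Open Scope classical_set_scope.
Local Open Scope ring_scope.
Import numFieldNormedType.Exports.

Definition pX {X : topologicalType} (x0 : X) : Type := X.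
HB.instance Definition _ (X : topologicalType) (x0 : X) := Topological.copy (pX x0) X.
HB.instance Definition _ (X : topologicalType) (x0 : X) := isPointed.Build (pX x0) x0.
Lemma compact_coverX (X : topologicalType) (x0 : X) (A : set X) :
  compact A = cover_compact A.
Proof. have H := congr1 (fun F => F A) (@compact_cover (pX x0)). exact H. Qed.

Lemma lemA (X : topologicalType) (O : nat -> set X) (xs : nat -> X) :
  tychonoff_space X -> pseudocompact X ->
  (forall n, open (O n)) -> (forall n, O n (xs n)) ->
  (forall z, exists N : set X, exists m : nat, open N /\ N z /\
       forall n, (m <= n)%N -> forall w, N w -> ~ O n w) -> False.
Proof.
move=> [_ tych] pc Oo Ox lf.
have /choice[h hP] : forall n, exists h : X -> Rdefinitions.R, continuous h /\
    (forall y, 0 <= h y <= 1) /\ h (xs n) = 0 /\ (forall a, (~` O n) a -> h a = 1).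
  move=> n; apply: tych; last by move/(_ (Ox n)).
  by rewrite -openC setCK.
pose t : nat -> X -> Rdefinitions.R := fun n x => n%:R * (1 - h n x).
pose S : nat -> X -> Rdefinitions.R := fun m x => \sum_(k < m) t k x.
have t0 n w : ~ O n w -> t n w = 0.
  by move=> nO; rewrite /t (hP n).2.2.2 // subrr mulr0.
have tge0 n w : 0 <= t n w.
  rewrite /t mulr_ge0 // subr_ge0.
  by case/andP: ((hP n).2.1 w).
have tcont n : continuous (t n).
  move=> x; rewrite /t.
  apply: cvgM; first exact: cvg_cst.
  apply: cvgB; first exact: cvg_cst.
  exact: (hP n).1.
have SS m : S m.+1 = (fun x => S m x + t m x) by apply/funext => x; rewrite /S big_ord_recr.
have Scont m : continuous (S m).
  elim: m => [|m IH].
    have -> : S 0%N = fun=> 0 by apply/funext => x; rewrite /S big_ord0.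
    exact: cst_continuous.
  rewrite SS => x; move: (IH x) (tcont m x); rewrite /continuous_at => H1 H2.
  apply: (@cvgD _ Rdefinitions.R^o); [exact: H1|exact: H2].
have Smono w m d : S m w <= S (m + d)%N w.
  elim: d => [|d IH]; first by rewrite addn0.
  by rewrite addnS SS /= (le_trans IH) // lerDl.
have Sstab w m d : (forall n, (m <= n)%N -> t n w = 0) -> S (m + d)%N w = S m w.
  move=> H; elim: d => [|d IH]; first by rewrite addn0.
  by rewrite addnS SS /= IH H ?addr0 // leq_addr.
have /choice[Nm HNm] : forall z, exists p : set X * nat, open p.1 /\ p.1 z /\
    forall n, (p.2 <= n)%N -> forall w, p.1 w -> ~ O n w.
  by move=> z; case: (lf z) => N [m H]; exists (N, m).
pose g x := S (Nm x).2 x.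
have gS x y : (Nm x).1 y -> g y = S (Nm x).2 y.
  move=> Nxy; rewrite /g.
  have [le|le] := leqP (Nm x).2 (Nm y).2.
    rewrite -(subnKC le) Sstab //.
    by move=> n mn; apply: t0; apply: (HNm x).2.2 mn _ Nxy.
  rewrite -(subnKC (ltnW le)) Sstab //.
  by move=> n mn; apply: t0; apply: (HNm y).2.2 mn _ (HNm y).2.1.
have gcont : continuous g.
  move=> x.
  have nb : \forall y \near x, S (Nm x).2 y = g y.
    apply: filterS (open_nbhs_nbhs (conj (HNm x).1 (HNm x).2.1)).
    by move=> y /gS ->.
  apply: cvg_trans (near_eq_cvg nb) _.
  rewrite (gS x x (HNm x).2.1); exact: Scont.
have [M HM] := pc g gcont.
have M0 : 0 <= M := le_trans (normr_ge0 _) (HM (xs 0%N)).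
set n := Num.bound M.
have Mn := archi_boundP M0.
have S0 w : S 0%N w = 0 by rewrite /S big_ord0.
have key k w : (n < k)%N -> t n w <= S k w.
  move=> nk; rewrite -(subnKC nk) (le_trans _ (Smono _ _ _)) // SS /= lerDr.
  by have := Smono w 0%N n; rewrite add0n S0.
have gx : g (xs n) = S ((Nm (xs n)).2 + n.+1)%N (xs n).
  rewrite /g Sstab //.
  by move=> k mk; apply: t0; apply: (HNm (xs n)).2.2 mk _ (HNm (xs n)).2.1.
have tn : t n (xs n) = n%:R by rewrite /t (hP n).2.2.1 subr0 mulr1.
have := key ((Nm (xs n)).2 + n.+1)%N (xs n) (leq_addl _ _).
rewrite -gx tn => le1.
have := le_trans (ler_norm _) (HM (xs n)).
move=> le2.
have := lt_le_trans Mn (le_trans le1 le2).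
by rewrite ltxx.
Qed.

Lemma lemB (X : topologicalType) (V Z : set X) :
  tychonoff_space X -> pseudocompact X -> open V -> lindelof Z ->
  closure V `<=` Z -> compact (closure V).
Proof.
move=> tX pc oV lZ KZ; set K := closure V.
have [_ tych] := tX.
case: (pselect (exists x0, K x0)) => [[x0 _]|nK]; last first.
  have -> : K = set0 by apply/seteqP; split => // x Kx; apply: nK; exists x.
  exact: compact0.
rewrite (compact_coverX x0) => I D f fo cov.
case: (pselect (finite_subset_cover D f K)) => // nP; exfalso.
pose P (A : set X) := finite_subset_cover D f A.
have PS A B : A `<=` B -> P B -> P A.
  by move=> AB [D' D'D BD']; exists D' => // x /AB /BD'.
have PU A B : P A -> P B -> P (A `|` B).
  move=> [D1 D1D AD1] [D2 D2D BD2]; exists (D1 `|` D2)%fset.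
    by move=> i; rewrite in_fsetU => /orP[/D1D|/D2D].
  move=> x [/AD1|/BD2] [i Di fx]; exists i => //=; rewrite in_fsetU ?Di ?orbT //.
have P0 : P set0 by exists fset0 => // i; rewrite in_fset0.
have /choice[Gf HG] : forall x, exists G : set X, open G /\ P (closure G) /\ (K x -> G x).
  move=> x; case: (pselect (K x)) => Kx; last first.
    by exists set0; rewrite closure0; split; [exact: open0|split].
  have [i Di fx] := cov x Kx.
  have [h [hc [h01 [hx h1]]]] : exists h : X -> Rdefinitions.R, continuous h /\
      (forall y, 0 <= h y <= 1) /\ h x = 0 /\ (forall a, (~` f i) a -> h a = 1).
    by apply: tych; [rewrite -openC setCK; exact: fo | by []].
  exists (h @^-1` [set r | r < 1/2]); split.
    by apply: open_comp; [move=> y _; exact: hc | exact: open_lt].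
  split; last by move=> _; rewrite /= hx; lra.
  have cl : closed (h @^-1` [set r | r <= 1/2]).
    by apply: preimage_closed; [move=> y _; exact: hc | exact: closed_le].
  apply: (PS _ (f i)); last first.
    exists [fset i]%fset; first by move=> j; rewrite in_fset1 => /eqP ->; apply/mem_set.
    by move=> y fiy; exists i => //=; rewrite in_fset1.
  move=> y /(closureS (B := h @^-1` [set r | r <= 1/2])) H.
  have {H} : h y <= 1/2.
    rewrite -(closure_id _).1 // in H; apply: H => z /= /ltW //.
  apply: contraPP => nfy; rewrite h1 //; lra.
pose U (o : option X) : set X := if o is Some x then Gf x else ~` K.
have oU o : open (U o).
  case: o => [x|] /=; first exact: (HG x).1.
  by rewrite openC; exact: closed_closure.
have cov' : Z `<=` \bigcup_(i in setT) U i.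
  move=> z _; case: (pselect (K z)) => Kz; last by exists None.
  by exists (Some z) => //; exact: (HG z).2.2 Kz.
have [J [cJ covJ]] := lZ _ U oU cov'.
have /countable_injP[e einj] := cJ.
pose G' (n : nat) := \bigcup_(x in [set x | J (Some x) /\ e (Some x) = n]) Gf x.
have G'o n : open (G' n) by apply: bigcup_open => x _; exact: (HG x).1.
have G'P n : P (closure (G' n)).
  case: (pselect (exists x, J (Some x) /\ e (Some x) = n)) => [[x1 [Jx0 ex0]]|nx].
    apply: (PS _ _ _ (HG x1).2.1); apply: closureS => y [x [Jx ex] Gxy].
    suff -> : x1 = x by [].
    have : Some x1 = Some x.
      by apply: einj; rewrite ?inE ?ex ?ex0 //; apply/mem_set.
    by case.
  apply: (PS _ _ _ P0) => y; rewrite (_ : G' n = set0) ?closure0 //.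
  by apply/seteqP; split => // z [x Jx _]; apply: nx; exists x.
have Kcov : forall z, K z -> exists n, G' n z.
  move=> z Kz; have [oi Jo Uoz] := covJ z (KZ z Kz).
  case: oi Jo Uoz => [x|] Jx /= Gxz; last by [].
  by exists (e (Some x)); exists x.
pose W := fix W n := if n is n'.+1 then W n' `|` G' n else G' 0%N.
have Wo n : open (W n) by elim: n => [|n IH] /=; [exact: G'o | exact: openU].
have WP n : P (closure (W n)).
  by elim: n => [|n IH] /=; [exact: G'P | rewrite closureU; exact: PU].
have Wsub k n : (k <= n)%N -> G' k `<=` W n.
  elim: n => [|n IH]; first by rewrite leqn0 => /eqP ->.
  rewrite leq_eqVlt => /orP[/eqP -> /=|kn] y Gy /=; first by right.
  by left; apply: IH.
have /choice[xs Hxs] : forall n, exists x, V x /\ ~ closure (W n) x.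
  move=> n; apply: contrapT => nex; apply: nP.
  apply: (PS _ _ _ (WP n)).
  rewrite [X in X `<=` _](_ : K = closure V) //.
  rewrite [X in _ `<=` X](closure_id _).1; last exact: closed_closure.
  apply: closureS => x Vx; apply: contrapT => nWx; apply: nex; exists x; by split.
apply: (@lemA X (fun n => V `&` ~` closure (W n)) xs tX pc).
- by move=> n; apply: openI => //; rewrite openC; exact: closed_closure.
- by move=> n; split; [exact: (Hxs n).1 | exact: (Hxs n).2].
move=> z; case: (pselect (K z)) => Kz.
  have [n0 Gz] := Kcov z Kz.
  exists (G' n0), n0; split => //; split => // n n0n w Gw [_]; apply.
  by apply: subset_closure; apply: (Wsub n0 n n0n).
exists (~` K), 0%N; split; first by rewrite openC; exact: closed_closure.
split => // n _ w nKw [Vw _]; apply: nKw; exact: subset_closure.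
Qed.

Unset Implicit Arguments.
Theorem theorem9p5 (X Y : topologicalType) :
  tychonoff_space X -> pseudocompact X -> ~ lindelof [set: X] ->
  hausdorff_space Y ->
  (EC_cl X Y <-> EC_cpt X Y).
Proof.
move=> tX pc _ hY; split.
- move=> H f fc; have [Z [cZ [lZ [y Hy]]]] := H f fc.
  pose V := f @^-1` (~` [set y]).
  have oV : open V.
    apply: open_comp; first by move=> x _; exact: fc.
    rewrite openC; exact: accessible_closed_set1 (hausdorff_accessible hY) y.
  have VZ : V `<=` Z.
    move=> v Vv; apply: contrapT => nZ; apply: Vv.
    by have : [set y] (f v) by rewrite -Hy; exists v.
  have KZ : closure V `<=` Z.
    by rewrite [X in _ `<=` X](closure_id _).1 //; exact: closureS.
  exists (closure V); split; first exact: lemB tX pc oV lZ KZ.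
  exists y; apply/seteqP; split.
    move=> _ [x nK <-]; apply: contrapT => nfx; apply: nK.
    by apply: subset_closure.
  move=> _ ->.
  have : (f @` ~` Z) y by rewrite Hy.
  by case=> x nZ fx; exists x => // Kx; apply: nZ; apply: KZ.
- move=> H f fc; have [Z [cZ [y Hy]]] := H f fc.
  exists Z; split; first exact: compact_closed tX.1 cZ.
  split; last by exists y.
  move=> I U oU cov.
  case: (pselect (exists x0, Z x0)) => [[x0 _]|nZ]; last first.
    exists set0; split; first exact: countable0.
    by move=> z Zz; exfalso; apply: nZ; exists z.
  move: cZ; rewrite (compact_coverX x0) => cZ.
  have [D' _ covD'] := cZ {classic I} setT U (fun i _ => oU i) cov.
  exists [set` D']; split; last exact: covD'.
  exact: finite_set_countable (finite_fset D').
Qed.
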